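(* Let $X$ be a complex Banach space and let $T\in\mathcal{B}(X)$ be a power-bounded operator such that $\sigma(T)\cap\mathbb{T}=\{1\}$. Let $m:(0,\pi]\to(0,\infty)$ be defined by $m(\theta)=\sup\{\|R(\mathrm{e}^{\mathrm{i}\vartheta},T)\|:\theta\leq|\vartheta|\leq\pi\}$. Suppose that $$\lim_{\theta\to0}\max\big\{\|\theta R(\mathrm{e}^{\mathrm{i}\theta},T)\|,\|\theta R(\mathrm{e}^{-\mathrm{i}\theta},T)\|\big\}=\infty.$$ Then, given any right-inverse $m^{-1}$ of $m$ (defined on the range of $m$), there exist constants $c,C>0$ such that $\|T^n(I-T)\|\geq c\, m^{-1}(Cn)$ for all sufficiently large $n\geq0$.
   Context: $T$ is power-bounded if $\sup_{n\geq0}\|T^n\|<\infty$; $\mathbb{T}$ is the unit circle; $R(\lambda,T)=(\lambda-T)^{-1}$. The function $m$ is continuous and decreasing; a right-inverse $m^{-1}$ is a function on the range of $m$ with $m(m^{-1}(s))=s$. *)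

(* Defs.v *)
From HB Require Import structures.
From mathcomp Require Import all_boot all_order all_algebra.
From mathcomp Require Import all_classical all_reals all_analysis.
From mathcomp Require Import complex.
Import Order.TTheory GRing.Theory Num.Theory.
Import numFieldNormedType.Exports.
Local Open Scope classical_set_scope.
Local Open Scope ring_scope.

(* The norm `|x| of x : X lives in R[i] (it is real and nonnegative);
   nrm x is its real part, i.e. the norm as a real number. *)
Definition nrm {R : realType} {X : normedModType R[i]} (x : X) : R :=
  complex.Re `|x|.

Definition bounded_op {R : realType} {X : normedModType R[i]} (f : X -> X) : Prop :=
  linear f /\ exists M : R, forall x, nrm (f x) <= M * nrm x.

Definition opnorm {R : realType} {X : normedModType R[i]} (f : X -> X) : R :=
  sup [set nrm (f x) | x in [set x : X | nrm x <= 1]].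

Definition is_resolvent {R : realType} {X : normedModType R[i]}
  (T : X -> X) (l : R[i]) (S : X -> X) : Prop :=
  bounded_op S /\ (forall x, S (l *: x - T x) = x) /\
  (forall x, l *: S x - T (S x) = x).

Definition spectrum {R : realType} {X : normedModType R[i]} (T : X -> X) : set R[i] :=
  [set l | ~ exists S, is_resolvent T l S].

(* the resolvent R(lambda, T) (a chosen inverse; it is unique when it exists) *)
Definition resolvent {R : realType} {X : normedModType R[i]} (T : X -> X) (l : R[i])
  : X -> X := get [set S | is_resolvent T l S].

Definition expi {R : realType} (t : R) : R[i] := (cos t +i* sin t)%C.

Definition mres {R : realType} {X : normedModType R[i]} (T : X -> X) (th : R) : R :=
  sup [set opnorm (resolvent T (expi v)) | v in [set v : R | th <= `|v| <= pi]].

Definition power_bounded {R : realType} {X : normedModType R[i]} (T : X -> X) : Prop :=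
  exists M : R, forall n : nat, opnorm (iter n T) <= M.

(* Main.v *)
Require Import Defs.
From HB Require Import structures.
From mathcomp Require Import all_boot all_order all_algebra.
From mathcomp Require Import all_classical all_reals all_analysis.
From mathcomp Require Import complex.
From mathcomp Require Import ring lra.
Import Order.TTheory GRing.Theory Num.Theory.
Import numFieldNormedType.Exports.
Local Open Scope classical_set_scope.
Local Open Scope ring_scope.



Section Nrm.
Context {R : realType} {X : normedModType R[i]}.
Implicit Types (x y : X) (a : R[i]).

Lemma normE x : `|x| = (nrm x)%:C%C.
Proof. by rewrite /nrm RRe_real // ger0_real. Qed.

Lemma nrm_ge0 x : 0 <= nrm x.
Proof. by rewrite -(@ler0c R) -normE. Qed.

Lemma nrmD x y : nrm (x + y) <= nrm x + nrm y.
Proof. by rewrite -(@lecR R) rmorphD /= -!normE ler_normD. Qed.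

Definition cabs (z : R[i]) : R := complex.Re `|z|.

Lemma cnormE (z : R[i]) : `|z| = (cabs z)%:C%C.
Proof. by rewrite /cabs RRe_real // ger0_real. Qed.

Lemma nrmZ a x : nrm (a *: x) = cabs a * nrm x.
Proof. by apply: (@complexI R); rewrite rmorphM /= -!normE -cnormE normrZ. Qed.

Lemma nrmN x : nrm (- x) = nrm x.
Proof. by rewrite /nrm normrN. Qed.

Lemma nrm0 : nrm (0 : X) = 0.
Proof. by rewrite /nrm normr0. Qed.

Lemma nrm_eq0 x : nrm x = 0 -> x = 0.
Proof. by move=> h; apply/normr0_eq0; rewrite normE h. Qed.

End Nrm.

Section Cabs.
Context {R : realType}.
Implicit Types z w : R[i].
Lemma cabs_ge0 z : 0 <= cabs z.
Proof. by rewrite -(@ler0c R) -cnormE. Qed.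
Lemma cabsD z w : cabs (z + w) <= cabs z + cabs w.
Proof. by rewrite -(@lecR R) rmorphD /= -!cnormE ler_normD. Qed.
Lemma cabsM z w : cabs (z * w) = cabs z * cabs w.
Proof. by apply: (@complexI R); rewrite rmorphM /= -!cnormE normrM. Qed.
Lemma cabsN z : cabs (- z) = cabs z.
Proof. by rewrite /cabs normrN. Qed.
Lemma cabsB z w : cabs (z - w) = cabs (w - z).
Proof. by rewrite -cabsN opprB. Qed.
Lemma cabs_eq0 z : cabs z = 0 -> z = 0.
Proof. by move=> h; apply/normr0_eq0; rewrite cnormE h. Qed.
Lemma cabs1 : cabs (1 : R[i]) = 1.
Proof. by rewrite /cabs (normr1 (R[i])). Qed.
Lemma cabsE z : cabs z = Num.sqrt ((complex.Re z)^+2 + (complex.Im z)^+2).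
Proof. by rewrite /cabs normc_def. Qed.
Lemma cabsC (r : R) : cabs (r%:C%C) = `|r|.
Proof. by rewrite cabsE /= expr0n /= addr0 sqrtr_sqr. Qed.
End Cabs.



Section Lin.
Context {R : realType} {X : normedModType R[i]}.
Implicit Types (f g : X -> X) (x y : X) (a : R[i]).

Lemma lin0 f : linear f -> f 0 = 0.
Proof.
move=> lf; have h := lf 1 0 0; rewrite scaler0 addr0 scale1r in h.
by apply: (addIr (f 0)); rewrite add0r -h.
Qed.

Lemma linZ f a x : linear f -> f (a *: x) = a *: f x.
Proof. by move=> lf; have := lf a x 0; rewrite !addr0 (lin0 _ lf) addr0. Qed.

Lemma linD f x y : linear f -> f (x + y) = f x + f y.
Proof. by move=> lf; have := lf 1 x y; rewrite !scale1r. Qed.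

Lemma linN f x : linear f -> f (- x) = - f x.
Proof. by move=> lf; rewrite -scaleN1r linZ // scaleN1r. Qed.

Lemma linB f x y : linear f -> f (x - y) = f x - f y.
Proof. by move=> lf; rewrite linD // linN. Qed.

Lemma lin_iter f n : linear f -> linear (iter n f).
Proof.
move=> lf; elim: n => [|n IH] a u v //=.
by rewrite IH lf.
Qed.

Definition bnd f := exists M : R, forall x, nrm (f x) <= M * nrm x.

Lemma bnd_ub f : bnd f -> has_ubound [set nrm (f x) | x in [set x : X | nrm x <= 1]].
Proof.
move=> [M hM]; exists (Num.max M 0) => _ [x hx <-].
apply: (le_trans (hM x)); apply: (le_trans (y := Num.max M 0 * nrm x)).
  by apply: ler_wpM2r; [exact: nrm_ge0| by rewrite le_max lexx].
by rewrite -[leRHS]mulr1; apply: ler_wpM2l => //; by rewrite le_max lexx orbT.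
Qed.

Lemma opnorm_le f K : 0 <= K -> (forall x, nrm (f x) <= K * nrm x) -> opnorm f <= K.
Proof.
move=> K0 hK; apply: ge_sup.
  by exists (nrm (f 0)); exists 0 => //=; rewrite nrm0 ler01.
move=> _ [x hx <-]; apply: (le_trans (hK x)).
by rewrite -[leRHS]mulr1; apply: ler_wpM2l.
Qed.

Lemma opnorm_ge0 f : linear f -> bnd f -> 0 <= opnorm f.
Proof.
move=> lf bf; apply: (le_trans (y := nrm (f 0))); first by rewrite lin0 // nrm0.
by apply: ub_le_sup; [exact: bnd_ub| exists 0 => //=; rewrite nrm0 ler01].
Qed.

Lemma opnorm_ub f x : linear f -> bnd f -> nrm (f x) <= opnorm f * nrm x.
Proof.
move=> lf bf; have [/nrm_eq0 ->|nx] := eqVneq (nrm x) 0.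
  by rewrite lin0 // !nrm0 mulr0.
have r0 : 0 < nrm x by rewrite lt_neqAle eq_sym nx nrm_ge0.
set y := ((nrm x)^-1)%:C%C *: x.
have ny : nrm y = 1 by rewrite /y nrmZ cabsC ger0_norm ?invr_ge0 ?nrm_ge0 // mulVf.
have : nrm (f y) <= opnorm f.
  by apply: ub_le_sup; [exact: bnd_ub| exists y => //=; rewrite ny].
rewrite /y linZ // nrmZ cabsC ger0_norm ?invr_ge0 ?nrm_ge0 //.
by rewrite ler_pdivrMl // mulrC.
Qed.

End Lin.



Section Res.
Context {R : realType} {X : normedModType R[i]}.
Variables (T : X -> X) (lT : linear T).
Implicit Types (f g S : X -> X) (x y : X) (a l : R[i]).

Lemma res_lin {l S} : is_resolvent T l S -> linear S.
Proof. by case=> [[]]. Qed.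

Lemma res_bnd {l S} : is_resolvent T l S -> bnd S.
Proof. by case=> [[]]. Qed.

Lemma res_comm l S x : is_resolvent T l S -> S (T x) = T (S x).
Proof.
move=> hS; have lS := res_lin hS; case: hS => _ [h1 h2].
have := h1 x; rewrite linB // linZ // => e1.
have e2 := h2 x.
have : l *: S x - S (T x) = l *: S x - T (S x) by rewrite e1 e2.
by move/addrI/oppr_inj.
Qed.

Lemma res_ident l S0 m S y : is_resolvent T l S0 -> is_resolvent T m S ->
  S0 y - S y = (m - l) *: S0 (S y).
Proof.
move=> h0 h; have l0 := res_lin h0; case: h0 => _ [h01 h02]; case: h => _ [h1 h2].
have e : S0 y - S y = S0 (m *: S y - T (S y)) - S0 (l *: S y - T (S y)).
  by rewrite h2 h01.
rewrite e -linB // -(linZ S0 (m - l) (S y) l0); congr (S0 _).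
by rewrite opprB addrA subrK scalerBl.
Qed.

Variable M : R.
Hypothesis MT : forall k x, nrm (iter k T x) <= M * nrm x.

Lemma res_bound l S n e x : is_resolvent T l S -> cabs l = 1 ->
  0 < cabs (1 - l) -> 2 * e <= cabs (1 - l) ->
  (forall x, nrm (iter n T (x - T x)) <= e * nrm x) ->
  nrm (S x) <= 2 * M * (n%:R + (cabs (1 - l))^-1) * nrm x.
Proof.
move=> hS l1 d0 de he; have lS := res_lin hS; have h2 := hS.2.2.
have Q : forall k, nrm (S x) <= k%:R * M * nrm x + nrm (iter k T (S x)).
  elim=> [|k IH] /=; first by rewrite mul0r mul0r add0r.
  apply: (le_trans IH).
  have -> : nrm (iter k T (S x)) = nrm (iter k T x + T (iter k T (S x))).
    rewrite -[LHS]mul1r -l1 -nrmZ -linZ; last exact: lin_iter.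
    rewrite -iterS iterSr -linD; last exact: lin_iter.
    by congr (nrm (iter k T _)); rewrite -[X in X + _](h2 x) subrK.
  rewrite mulrSr mulrDl mulrDl mul1r -addrA lerD2l.
  by apply: (le_trans (nrmD _ _)); rewrite lerD2r.
have E : iter n T (S x - T (S x)) = (1 - l) *: iter n T (S x) + iter n T x.
  have e' : S x - T (S x) = (1 - l) *: S x + (l *: S x - T (S x)).
    by rewrite scalerBl scale1r addrA subrK.
  have li := lin_iter T n lT.
  by rewrite e' (h2 x) linD // linZ.
have hb : cabs (1 - l) * nrm (iter n T (S x)) <= e * nrm (S x) + M * nrm x.
  rewrite -nrmZ.
  have -> : (1 - l) *: iter n T (S x) = iter n T (S x - T (S x)) - iter n T x.
    by rewrite E addrK.
  apply: (le_trans (nrmD _ _)); rewrite nrmN; apply: lerD => //.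
have hq := Q n.
set d := cabs (1 - l) in d0 de hb *.
set a := nrm (S x) in hq hb *; set b := nrm (iter n T (S x)) in hq hb.
set u := nrm x in hq hb *.
have a0 : 0 <= a by exact: nrm_ge0.
have u0 : 0 <= u by exact: nrm_ge0.
have ea : e * a <= d / 2 * a by apply: ler_wpM2r => //; lra.
have h1 : d * a <= d * (n%:R * M * u) + d * b by rewrite -mulrDr ler_wpM2l // ltW.
have : d * a <= 2 * M * (n%:R * d + 1) * u by nra.
move=> H; rewrite -(ler_pM2l d0); apply: (le_trans H); rewrite le_eqVlt; apply/orP; left.
by apply/eqP; field; rewrite gt_eqF.
Qed.

End Res.



Section Trig.
Context {R : realType}.
Implicit Types (v t x y : R).

Lemma cos_le_mono x y : 0 <= x -> x <= y -> y <= pi -> cos y <= cos x.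
Proof.
move=> x0 xy ypi; rewrite le_eqVlt in xy; case/orP: xy => [/eqP ->//|xy].
have hx : x \in `[0, pi] by rewrite in_itv /= x0 (ltW (lt_le_trans xy ypi)).
have hy : y \in `[0, pi] by rewrite in_itv /= ypi (le_trans x0 (ltW xy)).
by apply: ltW; rewrite (ltr_cos hx hy).
Qed.

Lemma cabs_expi v : cabs (expi v) = 1.
Proof.
rewrite cabsE /=; have h := cos2Dsin2 v.
have -> : cos v ^+ 2 + sin v ^+ 2 = 1 by [].
by rewrite sqrtr1.
Qed.

Lemma d_expi v : cabs (1 - expi v) = Num.sqrt (2 - 2 * cos v).
Proof.
rewrite cabsE /=; congr Num.sqrt.
have := cos2Dsin2 v; rewrite !expr2 => h.
nra.
Qed.

End Trig.

Section Trig2.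
Context {R : realType}.
Implicit Types (v t x y : R).

Lemma onemcos_low k t : pi / 2^+(k.+1) <= t <= pi -> t^+2 / (2 * pi^+2) <= 1 - cos t.
Proof.
have pi0 : 0 < pi :> R by exact: pi_gt0.
have p20 : 0 < 2 * pi ^+ 2 :> R by rewrite mulr_gt0 // exprn_gt0.
elim: k t => [|k IH] t /andP[lo hi].
  have t0 : 0 <= t by apply: le_trans lo; rewrite expr1 divr_ge0 // ltW.
  have c0 : cos t <= 0.
    rewrite -(@cos_pihalf R); apply: cos_le_mono => //.
    by rewrite divr_ge0 // ltW.
  rewrite ler_pdivrMr //; nra.
have pk : 2 <= 2 ^+ k.+1 :> R.
  by rewrite exprS -[leLHS]mulr1 ler_pM2l //; apply: exprn_ege1; rewrite ler1n.
have pk0 : 0 < 2 ^+ k.+1 :> R by apply: lt_le_trans pk.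
have [h|h] := leP (pi / 2 ^+ k.+1) t; first by apply: IH; rewrite h hi.
have h2 := IH (t *+ 2).
have t0 : 0 <= t.
  by apply: le_trans lo; rewrite divr_ge0 // ?ltW // exprn_gt0.
rewrite cos_mulr2n in h2.
have : (t *+ 2) ^+ 2 / (2 * pi ^+ 2) <= 1 - (cos t ^+ 2 *+ 2 - 1).
  apply: h2; apply/andP; split.
    move: lo; rewrite exprS ler_pdivrMr ?mulr_gt0 // => lo.
    by rewrite ler_pdivrMr // mulr2n; nra.
  move: h; rewrite ltr_pdivlMr // => h.
  rewrite mulr2n; nra.
have c1 := cos_le1 t.
rewrite !ler_pdivrMr // => H.
rewrite mulr2n in H; nra.
Qed.

End Trig2.

Section Trig3.
Context {R : realType}.
Implicit Types (v t x y : R).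

Lemma d_norm v : cabs (1 - expi v) = cabs (1 - expi `|v|).
Proof. by rewrite !d_expi cos_norm. Qed.

Lemma d_mono t v : 0 <= t -> t <= `|v| -> `|v| <= pi ->
  cabs (1 - expi t) <= cabs (1 - expi v).
Proof.
move=> t0 tv vp; rewrite !d_expi; apply: ler_wsqrtr.
rewrite -(cos_norm v); have := cos_le_mono _ _ t0 tv vp; lra.
Qed.

Lemma d_low t : 0 <= t <= pi -> t / pi <= cabs (1 - expi t).
Proof.
move=> /andP[t0 tp]; have pi0 : 0 < pi :> R by exact: pi_gt0.
have [->|tn0] := eqVneq t 0; first by rewrite mul0r cabs_ge0.
have tpos : 0 < t by rewrite lt_neqAle eq_sym tn0.
have [n hn] : exists n, pi / t < n%:R.
  by exists (Num.bound (pi / t)); apply: archi_boundP; rewrite divr_ge0 // ltW.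
have hk : pi / 2 ^+ n.+1 <= t.
  rewrite ler_pdivrMr ?exprn_gt0 //.
  move: hn; rewrite ltr_pdivrMr // => hn; apply: ltW; apply: (lt_le_trans hn).
  rewrite [leRHS]mulrC ler_pM2r //.
  have : (n < 2 ^ n.+1)%N by apply: (ltn_trans (ltn_expl n (isT : (1 < 2)%N))); rewrite ltn_exp2l.
  by move/ltnW; rewrite -(ler_nat R) natrX.
have := @onemcos_low R n t; rewrite hk tp => /(_ isT) h.
have q0 : 0 <= t / pi by rewrite divr_ge0 // ltW.
rewrite d_expi -(ger0_norm q0) -sqrtr_sqr; apply: ler_wsqrtr.
move: h; rewrite expr_div_n ler_pdivrMr ?mulr_gt0 ?exprn_gt0 //.
rewrite ler_pdivrMr ?exprn_gt0 //; nra.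
Qed.
End Trig3.



Section Bridge.
Context {R : realType}.

Definition ceps (f : R -> R) (x : R) := forall e : R, 0 < e ->
  exists2 d : R, 0 < d & forall y, `|y - x| < d -> `|f y - f x| < e.

Lemma cont_ceps f x : {for x, continuous f} -> ceps f x.
Proof.
move=> /cvgrPdist_lt h e e0; have := h e e0; move/nbhs_normP => [d /= d0 hd].
exists d => // y yx; rewrite distrC; apply: hd => /=; by rewrite distrC.
Qed.

Lemma ceps_cont f x : ceps f x -> {for x, continuous f}.
Proof.
move=> h; apply/cvgrPdist_lt => e e0; apply/nbhs_normP.
have [d d0 hd] := h e e0; exists d => //= y yx; rewrite distrC; apply: hd.
by rewrite distrC.
Qed.

End Bridge.
Arguments cont_ceps {R f x}.
Arguments ceps_cont {R f x}.



Section Cont.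
Context {R : realType} {X : normedModType R[i]}.
Variables (T : X -> X) (lT : linear T).
Hypothesis Hsp : forall z : R[i], `|z| = 1 -> (spectrum T z <-> z = 1).

Lemma res_ex z : cabs z = 1 -> z != 1 -> is_resolvent T z (resolvent T z).
Proof.
move=> z1 zn1; apply: getPex; apply: contrapT => hn.
have : spectrum T z by [].
by move/(Hsp z); rewrite cnormE z1 => /(_ erefl) /eqP; rewrite (negbTE zn1).
Qed.

Definition gg (v : R) := opnorm (resolvent T (expi v)).

Lemma cabs_le_sum (z : R[i]) : cabs z <= `|complex.Re z| + `|complex.Im z|.
Proof.
rewrite cabsE; set a := complex.Re z; set b := complex.Im z.
rewrite -[leRHS]ger0_norm ?addr_ge0 // -sqrtr_sqr; apply: ler_wsqrtr.
rewrite sqrrD !real_normK ?num_real // mulr2n; have := normr_ge0 a; have := normr_ge0 b; nra.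
Qed.

Lemma expi_ceps v0 : forall e : R, 0 < e ->
  exists2 d : R, 0 < d & forall v, `|v - v0| < d -> cabs (expi v - expi v0) < e.
Proof.
move=> e e0; have e20 : 0 < e / 2 by rewrite divr_gt0.
have [d1 d10 h1] := cont_ceps (@continuous_cos R v0) _ e20.
have [d2 d20 h2] := cont_ceps (@continuous_sin R v0) _ e20.
exists (Num.min d1 d2); first by rewrite lt_min d10 d20.
move=> v; rewrite lt_min => /andP[v1 v2].
apply: (le_lt_trans (cabs_le_sum _)) => /=.
have := h1 v v1; have := h2 v v2; lra.
Qed.

Lemma gg_ceps v0 : expi v0 != 1 -> ceps gg v0.
Proof.
move=> n1 e e0.
set l0 := expi v0; set S0 := resolvent T l0.
have hS0 : is_resolvent T l0 S0 by apply: res_ex; rewrite ?cabs_expi.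
have [M0 hM0] := res_bnd T hS0.
set K := Num.max M0 0 + 1.
have K0 : 0 < K by rewrite /K ltr_pwDr // le_max lexx orbT.
have hK : forall y, nrm (S0 y) <= K * nrm y.
  move=> y; apply: (le_trans (hM0 y)); apply: ler_wpM2r; first exact: nrm_ge0.
  rewrite /K; apply: (le_trans (y := Num.max M0 0)); first by rewrite le_max lexx.
  by rewrite lerDl.
set d0 := cabs (1 - l0).
have d00 : 0 < d0.
  rewrite lt_neqAle cabs_ge0 andbT eq_sym; apply/eqP => /cabs_eq0 /eqP.
  by rewrite subr_eq0 eq_sym (negbTE n1).
set rho := Num.min (Num.min (1 / (2 * K)) d0) (e / (4 * K ^+ 2)).
have rho0 : 0 < rho.
  by rewrite /rho !lt_min d00 !divr_gt0 ?mulr_gt0 ?exprn_gt0.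
have [d dpos hd] := expi_ceps v0 _ rho0.
exists d => // v vv0.
have hc := hd v vv0; set m := expi v in hc *; set c := cabs (m - l0) in hc.
have c0 : 0 <= c by exact: cabs_ge0.
move: hc; rewrite /rho !lt_min => /andP[/andP[cK cd] ce].
have mn1 : m != 1.
  by apply/eqP => m1; move: cd; rewrite /c m1 -/d0 ltxx.
have hS : is_resolvent T m (resolvent T m) by apply: res_ex; rewrite ?cabs_expi.
set S := resolvent T m in hS.
have hI := fun y => @res_ident _ _ T _ _ _ _ y hS0 hS.
have cK2 : c * K <= 1 / 2.
  by move: cK; rewrite ltr_pdivlMr ?mulr_gt0 // => h; lra.
have hS2 : forall y, nrm (S y) <= 2 * K * nrm y.
  move=> y.
  have : nrm (S y) <= K * nrm y + c * (K * nrm (S y)).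
    have E : S y = S0 y - (m - l0) *: S0 (S y) by rewrite -(hI y) opprB addrC subrK.
    rewrite {1}E; apply: (le_trans (nrmD _ _)); rewrite nrmN nrmZ -/c; apply: lerD => //.
    exact: ler_wpM2l.
  have := nrm_ge0 (S y); have := nrm_ge0 y; nra.
have hdiff : forall y, nrm (S0 y - S y) <= 2 * K ^+ 2 * c * nrm y.
  move=> y; rewrite hI nrmZ -/c.
  apply: (le_trans (y := c * (K * (2 * K * nrm y)))).
    apply: ler_wpM2l => //; apply: (le_trans (hK _)); apply: ler_wpM2l; first exact: ltW.
    exact: hS2.
  by rewrite le_eqVlt; apply/orP; left; apply/eqP; ring.
have lS := res_lin T hS; have lS0 := res_lin T hS0.
have bS := res_bnd T hS; have bS0 := res_bnd T hS0.
have g0 := opnorm_ge0 _ lS bS; have g00 := opnorm_ge0 _ lS0 bS0.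
have ce' : 2 * K ^+ 2 * c < e.
  by move: ce; rewrite ltr_pdivlMr ?mulr_gt0 ?exprn_gt0 // => h; lra.
have B1 : opnorm S0 <= opnorm S + 2 * K ^+ 2 * c.
  apply: opnorm_le; first by rewrite addr_ge0 // !mulr_ge0 // ltW.
  move=> y; have -> : S0 y = S y + (S0 y - S y) by rewrite addrC subrK.
  apply: (le_trans (nrmD _ _)); rewrite mulrDl; apply: lerD => //.
  exact: opnorm_ub.
have B2 : opnorm S <= opnorm S0 + 2 * K ^+ 2 * c.
  apply: opnorm_le; first by rewrite addr_ge0 // !mulr_ge0 // ltW.
  move=> y; have -> : S y = S0 y - (S0 y - S y) by rewrite opprB addrC subrK.
  apply: (le_trans (nrmD _ _)); rewrite nrmN mulrDl; apply: lerD => //.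
  exact: opnorm_ub.
rewrite /gg -/m -/S -/l0 -/S0.
rewrite ltr_norml; apply/andP; split; lra.
Qed.

End Cont.



Section Max.
Context {R : realType}.

Lemma max_dist (a b c d e : R) : `|a - c| < e -> `|b - d| < e ->
  `|Num.max a b - Num.max c d| < e.
Proof.
rewrite !ltr_norml => /andP[h1 h2] /andP[h3 h4].
by case: (leP a b) => ab; case: (leP c d) => cd; apply/andP; split; lra.
Qed.

Lemma min_dist (a b : R) (p : R) : `|Num.min a p - Num.min b p| <= `|a - b|.
Proof.
have h1 := ler_norm (a - b); have h2 : b - a <= `|a - b| by rewrite distrC ler_norm.
by case: (leP a p) => ap; case: (leP b p) => bp; rewrite ler_norml; apply/andP; split; lra.
Qed.

End Max.

Section Sup.
Context {R : realType}.

Lemma sup_attained (S : set R) (y : R) : S y -> ubound S y -> sup S = y.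
Proof.
move=> Sy uy; apply/eqP; rewrite eq_le; apply/andP; split.
  by apply: ge_sup => //; exists y.
by apply: ub_le_sup => //; exists y.
Qed.

End Sup.



Section MainM.
Context {R : realType} {X : normedModType R[i]}.
Variables (T : X -> X) (lT : linear T).
Hypothesis Hsp : forall z : R[i], `|z| = 1 -> (spectrum T z <-> z = 1).

Definition GG (v : R) := Num.max (gg T v) (gg T (- v)).

Lemma expi_neq1 (v : R) : 0 < `|v| <= pi -> expi v != 1.
Proof.
move=> /andP[v0 vp]; apply/eqP => e.
have := @d_low R `|v|; rewrite normr_ge0 vp -d_norm e subrr /cabs normr0 /=.
move=> /(_ isT); rewrite ler_pdivrMr ?pi_gt0 // mul0r; lra.
Qed.

Lemma GG_ceps v : 0 < v <= pi -> ceps GG v.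
Proof.
move=> /andP[v0 vp] e e0.
have n1 : expi v != 1 by apply: expi_neq1; rewrite gtr0_norm ?v0.
have n2 : expi (- v) != 1 by apply: expi_neq1; rewrite normrN gtr0_norm ?v0.
have [d1 d10 h1] := @gg_ceps _ _ T Hsp v n1 e e0.
have [d2 d20 h2] := @gg_ceps _ _ T Hsp (- v) n2 e e0.
exists (Num.min d1 d2); first by rewrite lt_min d10 d20.
move=> y; rewrite lt_min => /andP[y1 y2]; rewrite /GG; apply: max_dist.
  exact: h1.
by apply: h2; rewrite -opprD normrN.
Qed.

Lemma GG_argmax t : 0 < t <= pi ->
  exists c, [/\ t <= c <= pi, (forall v, t <= v <= pi -> GG v <= GG c) &
     mres T t = GG c].
Proof.
move=> /andP[t0 tp].
have wc : {within `[t, pi], continuous GG}.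
  apply: continuous_in_subspaceT => x; rewrite inE /= in_itv /= => /andP[tx xp].
  apply: ceps_cont; apply: GG_ceps; by rewrite xp (lt_le_trans t0 tx).
have [c cin hc] := EVT_max tp wc.
move: cin; rewrite in_itv /= => /andP[tc cp].
exists c; split; first by rewrite tc cp.
  by move=> v hv; apply: hc; rewrite in_itv.
have c0 : 0 <= c by apply: le_trans tc; apply: ltW.
rewrite /mres; apply: sup_attained.
  rewrite /GG; case: (leP (gg T c) (gg T (- c))) => _.
    by exists (- c) => //; rewrite /= normrN ger0_norm // tc cp.
  by exists c => //; rewrite /= ger0_norm // tc cp.
move=> _ [v /andP[tv vp] <-].
have hv : GG `|v| <= GG c by apply: hc; rewrite in_itv /= tv vp.
apply: le_trans hv; rewrite /GG.
case: (ltP v 0) => v0.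
  by rewrite ltr0_norm // opprK le_max lexx orbT.
by rewrite ger0_norm // le_max lexx.
Qed.

Definition mm (t : R) := mres T (Num.min t pi).

Lemma mm_ceps t : 0 < t -> ceps mm t.
Proof.
move=> t0 e e0; set u := Num.min t pi.
have u0 : 0 < u by rewrite /u lt_min t0 pi_gt0.
have up : u <= pi by rewrite /u ge_min lexx orbT.
have e20 : 0 < e / 2 by rewrite divr_gt0.
have [d1 d10 h1] := GG_ceps u (introT andP (conj u0 up)) _ e20.
have [c [/andP[uc cp] hc mc]] := GG_argmax u (introT andP (conj u0 up)).
exists (Num.min d1 (u / 2)); first by rewrite lt_min d10 divr_gt0.
move=> y; rewrite lt_min => /andP[yd1 yd2].
set u' := Num.min y pi.
have uu : `|u' - u| < Num.min d1 (u / 2).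
  apply: le_lt_trans (min_dist _ _ _) _; rewrite lt_min yd1 yd2 //.
move: uu; rewrite lt_min => /andP[uu1 uu2].
have u'0 : 0 < u'.
  move: uu2; rewrite ltr_norml => /andP[h _]; lra.
have u'p : u' <= pi by rewrite /u' ge_min lexx orbT.
have [c' [/andP[uc' cp'] hc' mc']] := GG_argmax u' (introT andP (conj u'0 u'p)).
rewrite /mm -/u -/u' mc mc'.
have A : GG c' <= GG c + e / 2.
  have [ct|ct] := leP u c'.
    by apply: (le_trans (hc c' _)); [rewrite ct cp' | rewrite lerDl ltW].
  have : `|GG c' - GG u| < e / 2.
    apply: h1; move: uu1; rewrite !ltr_norml => /andP[a b]; apply/andP; split; lra.
  have := hc u; rewrite lexx up => /(_ isT).
  rewrite ltr_norml => ? /andP[? ?]; lra.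
have B : GG c < GG c' + e.
  have [ct|ct] := leP u' c.
    by apply: (le_lt_trans (hc' c _)); [rewrite ct cp | rewrite ltrDl].
  have : `|GG c - GG u| < e / 2.
    by apply: h1; rewrite ger0_norm ?subr_ge0 //; move: uu1; rewrite ltr_norml; lra.
  have : `|GG u' - GG u| < e / 2 by apply: h1.
  have := hc' u'; rewrite lexx u'p => /(_ isT).
  rewrite !ltr_norml => ? /andP[? ?] /andP[? ?]; lra.
rewrite ltr_norml; apply/andP; split; lra.
Qed.

End MainM.



Section Range.
Context {R : realType} {X : normedModType R[i]}.
Variables (T : X -> X) (lT : linear T).
Hypothesis Hsp : forall z : R[i], `|z| = 1 -> (spectrum T z <-> z = 1).
Hypothesis Hblow : (Num.max (`|th| * opnorm (resolvent T (expi th)))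
           (`|th| * opnorm (resolvent T (expi (- th))))
     @[th --> 0^'] --> +oo).

Lemma blow_eps (A : R) : exists2 d : R, 0 < d &
  forall th, 0 < th < d -> A < th * GG T th.
Proof.
have := (cvgryPgt _).1 Hblow A; rewrite near_withinE => H; have [d /= d0 hd] := (nbhs_normP _ _).1 (H _).
exists d => // th /andP[t0 td].
have bt : ball_ Num.Def.normr 0 d th by rewrite /ball_ /= sub0r normrN gtr0_norm.
have := hd th bt (lt0r_neq0 t0); rewrite gtr0_norm // => /lt_le_trans; apply; rewrite /GG ge_max; apply/andP; split.
  by apply: ler_wpM2l; [exact: ltW| rewrite le_max lexx].
by apply: ler_wpM2l; [exact: ltW| rewrite le_max lexx orbT].
Qed.

Lemma mres_range s : mres T pi <= s -> exists th, 0 < th <= pi /\ mres T th = s.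
Proof.
move=> hs; have pi0 : 0 < pi :> R by exact: pi_gt0.
have [d d0 hd] := blow_eps ((`|s| + 1) * pi).
set t0 := Num.min (d / 2) pi.
have t00 : 0 < t0 by rewrite /t0 lt_min pi0 divr_gt0.
have t0d : t0 < d by rewrite /t0 gt_min; apply/orP; left; lra.
have t0p : t0 <= pi by rewrite /t0 ge_min lexx orbT.
have h1 := hd t0 (introT andP (conj t00 t0d)).
have [c [/andP[tc cp] hc mc]] := @GG_argmax _ _ T Hsp t0 (introT andP (conj t00 t0p)).
have G1 : s < GG T t0.
  have := normr_ge0 s; have := ler_norm s; nra.
have G2 : s <= mm T t0.
  rewrite /mm (min_idPl t0p) mc; apply: ltW; apply: (lt_le_trans G1).
  by apply: hc; rewrite lexx t0p.
have wc : {within `[t0, pi], continuous (mm T)}.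
  apply: continuous_in_subspaceT => x; rewrite inE /= in_itv /= => /andP[tx xp].
  by apply: ceps_cont; apply: (@mm_ceps _ _ T Hsp); apply: lt_le_trans tx.
have [th thin hth] : exists2 c, c \in `[t0, pi] & mm T c = s.
  apply: IVT => //.
  rewrite ge_min le_max; apply/andP; split.
    by apply/orP; right; rewrite /mm minxx.
  by apply/orP; left.
move: thin; rewrite in_itv /= => /andP[h1' h2'].
exists th; split; first by rewrite h2' (lt_le_trans t00 h1').
by move: hth; rewrite /mm (min_idPl h2').
Qed.
End Range.



Theorem corollary2p6 (R : realType) (X : completeNormedModType R[i])
  (T : X -> X) (minv : R -> R) :
  bounded_op T ->
  power_bounded T ->
  (forall z : R[i], `|z| = 1 -> (spectrum T z <-> z = 1)) ->
  (Num.max (`|th| * opnorm (resolvent T (expi th)))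
           (`|th| * opnorm (resolvent T (expi (- th))))
     @[th --> 0^'] --> +oo) ->
  (forall s : R, (exists2 th : R, 0 < th <= pi & mres T th = s) ->
     0 < minv s <= pi /\ mres T (minv s) = s) ->
  exists c C : R, 0 < c /\ 0 < C /\
    \forall n \near \oo,
      c * minv (C * n%:R) <= opnorm (fun x => iter n T (x - T x)).
Proof.
move=> [lT [B hB]] [M0 hM0] Hsp Hblow Hminv.
have pi0 : 0 < pi :> R by exact: pi_gt0.
set B' := Num.max B 0.
have hB' : forall y, nrm (T y) <= B' * nrm y.
  move=> y; apply: (le_trans (hB y)); apply: ler_wpM2r; first exact: nrm_ge0.
  by rewrite le_max lexx.
have bnd_it : forall k, bnd (iter k T).
  move=> k; exists (B' ^+ k); elim: k => [|k IH] x /=; first by rewrite expr0 mul1r.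
  apply: (le_trans (hB' _)); rewrite exprS -mulrA; apply: ler_wpM2l => //.
  by rewrite le_max lexx orbT.
set M := Num.max M0 1.
have M1 : 1 <= M by rewrite le_max lexx orbT.
have M0' : 0 < M by apply: lt_le_trans M1.
have MT : forall k x, nrm (iter k T x) <= M * nrm x.
  move=> k x; apply: (le_trans (opnorm_ub (iter k T) x (lin_iter _ k lT) (bnd_it k))).
  apply: ler_wpM2r; first exact: nrm_ge0.
  by apply: (le_trans (hM0 k)); rewrite le_max lexx.
set P := fun n (x : X) => iter n T (x - T x).
have lP : forall n, linear (P n).
  move=> n a u v; rewrite /P (lT a u v).
  have -> : a *: u + v - (a *: T u + T v) = a *: (u - T u) + (v - T v).
    by rewrite scalerBr opprD addrACA.
  by rewrite (lin_iter _ n lT).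
have bP : forall n, bnd (P n).
  move=> n; exists (M * (1 + M)) => x; rewrite /P.
  apply: (le_trans (MT _ _)); rewrite -mulrA; apply: ler_wpM2l; first exact: ltW.
  apply: (le_trans (nrmD _ _)); rewrite nrmN mulrDl mul1r lerD2l.
  by apply: (MT 1).
set eps := fun n => opnorm (P n).
have he : forall n x, nrm (P n x) <= eps n * nrm x.
  by move=> n x; apply: opnorm_ub.
have eps0 : forall n, 0 <= eps n by move=> n; apply: opnorm_ge0.
have [db db0 hdb] := @blow_eps _ _ T Hblow (4 * M * pi).
set C := 4 * M + 1.
have C0 : 0 < C by rewrite /C; lra.
set Q := `|mres T pi| / C + 2 * M * pi / db.
have Q0 : 0 <= Q.
  rewrite /Q; apply: addr_ge0; apply: divr_ge0.
  + exact: normr_ge0.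
  + exact: ltW.
  + by rewrite !mulr_ge0 // ltW.
  + exact: ltW.
exists (1 / (2 * pi)), C; split; first by rewrite divr_gt0 // mulr_gt0.
split => //.
exists (Num.bound Q).+1 => // n /= hn.
have nQ : Q < n%:R.
  apply: (lt_le_trans (archi_boundP Q0)); rewrite ler_nat; exact: ltnW.
have n1 : 1 <= n%:R :> R by rewrite ler1n; apply: leq_trans hn.
set s := C * n%:R.
have hs : mres T pi <= s.
  apply: (le_trans (ler_norm _)); rewrite /s -ler_pdivrMl //.
  apply: ltW; apply: le_lt_trans nQ; rewrite /Q mulrC lerDl.
  by apply: divr_ge0; [rewrite !mulr_ge0 // ltW | exact: ltW].
have [th [/andP[th0 thp] mth]] := @mres_range _ _ T Hsp Hblow _ hs.
have [/andP[t0 tp] mt] := Hminv s (ex_intro2 _ _ th (introT andP (conj th0 thp)) mth).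
set t := minv s in t0 tp mt *.
rewrite -/(P n) -/(eps n).
set d := cabs (1 - expi t).
have dlow : t / pi <= d by apply: d_low; rewrite ltW.
have [dle|dgt] := leP d (2 * eps n).
  have e1 : forall p : R, 0 < p -> 1 / (2 * p) * t = (t / p) / 2.
    by move=> p p0; field; rewrite gt_eqF.
  rewrite e1 //; lra.
exfalso.
have [c0 [/andP[tc cp] hc mc]] := @GG_argmax _ _ T Hsp t (introT andP (conj t0 tp)).
have d0 : 0 < d by apply: lt_le_trans dlow; rewrite divr_gt0.
set D := d^-1.
have D0 : 0 < D by rewrite invr_gt0.
have c00 : 0 <= c0 by apply: le_trans tc; exact: ltW.
have bw : forall w, `|w| = c0 -> gg T w <= 2 * M * (n%:R + D).
  move=> w hw.
  have dw : d <= cabs (1 - expi w) by apply: d_mono; [exact: ltW | rewrite hw | rewrite hw].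
  have dw0 : 0 < cabs (1 - expi w) by apply: lt_le_trans dw.
  have n1w : expi w != 1.
    by apply/eqP => e; move: dw0; rewrite e subrr /cabs normr0 /= ltxx.
  have hS := @res_ex _ _ T Hsp _ (cabs_expi w) n1w.
  apply: (le_trans (y := 2 * M * (n%:R + (cabs (1 - expi w))^-1))).
    rewrite /gg; apply: opnorm_le.
      apply: mulr_ge0; first by apply: mulr_ge0 => //; exact: ltW.
      by apply: addr_ge0 => //; rewrite invr_ge0 ltW.
    move=> x; apply: (@res_bound _ _ T lT M MT _ _ n (eps n) x hS (cabs_expi w) dw0 _ (he n)).
    by apply: (le_trans (ltW dgt)).
  apply: ler_wpM2l; first by rewrite mulr_ge0 // ltW.
  by rewrite lerD2l lef_pV2 ?posrE.
have sle : s <= 2 * M * (n%:R + D).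
  rewrite -mt mc /GG ge_max; apply/andP; split; apply: bw.
    exact: ger0_norm.
  by rewrite normrN ger0_norm.
have sGt : GG T t <= s by rewrite -mt mc; apply: hc; rewrite lexx tp.
have dD : d * D = 1 by rewrite mulfV // gt_eqF.
have tpd : t <= pi * d by move: dlow; rewrite ler_pdivrMr // mulrC.
have n0 : 0 < n%:R :> R by apply: lt_le_trans n1; rewrite ltr01.
have sE : s = 4 * (M * n%:R) + n%:R by rewrite /s /C; ring.
have s0 : 0 <= s by rewrite sE; apply: addr_ge0 => //; rewrite !mulr_ge0 // ltW.
rewrite mulrDr in sle.
have [tdb|tdb] := ltP t db.
  have h := hdb t (introT andP (conj t0 tdb)).
  have h1 : t * GG T t <= t * s by apply: ler_wpM2l => //; exact: ltW.
  have h2 : t * s <= pi * d * s by apply: ler_wpM2r.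
  have h3 : 4 * M < d * s.
    rewrite -(ltr_pM2l pi0) mulrC mulrA; apply: (lt_le_trans h); apply: (le_trans h1).
    exact: h2.
  have h4 : 4 * (M * D) < s.
    have e : (d * s) * D = s by rewrite mulrAC dD mul1r.
    by rewrite -[X in _ < X]e mulrA ltr_pM2r.
  lra.
have dlb : db / pi <= d by apply: le_trans dlow; rewrite ler_pM2r // invr_gt0.
have hD : D <= pi / db.
  rewrite /D -(invf_div db pi) lef_pV2 ?posrE ?divr_gt0 //.
have h5 : 2 * (M * D) <= 2 * M * pi / db.
  rewrite -mulrA -mulrA ler_pM2l // ler_pM2l //.
have h6 : 2 * M * pi / db <= Q by rewrite /Q lerDr divr_ge0 // ?ltW.
have Mn : 0 <= M * n%:R by rewrite mulr_ge0 // ltW.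
lra.
Qed.
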